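(* Let $P(X,Y,Z)=X+\frac{1}{X}+Y+\frac{1}{Y}+Z+\frac{1}{Z}-2$ and let $D_P=\{(X,Y,Z)\in(\mathbb{C}^\times)^3 : P(X,Y,Z)=0,\ |X|=|Y|=1,\ |Z|>1\}$. The map $(X,Y,Z)\mapsto Z$ defines a fibration of $D_P\setminus\{(-1,-1,3+2\sqrt{2})\}$ above the interval $(1,3+2\sqrt{2})$. The fibres are homeomorphic to $S^1$ and, writing $X=e^{i\phi}$, $Y=e^{i\psi}$, the fibre above $Z$ is given by the implicit equation \[ \cos\phi+\cos\psi = 1-\frac12\Big(Z+\frac1Z\Big). \] *)

(* Defs.v *)
From HB Require Import structures.
From mathcomp Require Import all_boot all_order all_algebra.
From mathcomp Require Import all_classical all_reals all_analysis.
From mathcomp Require Export complex.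
Import Order.TTheory GRing.Theory Num.Theory.
Import numFieldNormedType.Exports.

Set Implicit Arguments.
Unset Strict Implicit.
Unset Printing Implicit Defensive.

Local Open Scope ring_scope.
Local Open Scope classical_set_scope.
Local Open Scope complex_scope.

HB.instance Definition _ (R : realType) :=
  PseudoPointedMetric.copy R[i] (R[i])^o.

Definition homeo_via (T1 T2 : topologicalType) (A : set T1) (B : set T2)
  (f : T1 -> T2) (g : T2 -> T1) : Prop :=
  [/\ (forall x, A x -> B (f x)),
      (forall y, B y -> A (g y)),
      (forall x, A x -> g (f x) = x),
      (forall y, B y -> f (g y) = y) &
      {within A, continuous f} /\ {within B, continuous g}].

Definition homeomorphic (T1 T2 : topologicalType) (A : set T1) (B : set T2)
  : Prop := exists f g, @homeo_via T1 T2 A B f g.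

Definition fibre_bundle (T S U : topologicalType) (E : set T) (B : set S)
  (pi : T -> S) (F : set U) : Prop :=
  pi @` E = B /\
  forall b, B b -> exists V : set S, [/\ open V, V b &
    exists (h : T -> S * U) (g : S * U -> T),
      homeo_via (E `&` pi @^-1` V) ((B `&` V) `*` F) h g /\
      (forall x, (E `&` pi @^-1` V) x -> (h x).1 = pi x)].

Section LaurentP.
Variable R : realType.

Definition Pol (X Y Z : R[i]) : R[i] :=
  X + X^-1 + Y + Y^-1 + Z + Z^-1 - 2.

Definition DP : set (R[i] * R[i] * R[i]) :=
  [set p | [/\ p.1.1 != 0, p.1.2 != 0, p.2 != 0,
              Pol p.1.1 p.1.2 p.2 = 0 &
              [/\ `|p.1.1| = 1, `|p.1.2| = 1 & 1 < `|p.2| ] ] ].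

Definition zmax : R := 3 + 2 * Num.sqrt 2.

Definition DP' : set (R[i] * R[i] * R[i]) :=
  DP `\ ((-1, -1), (zmax)%:C).

Definition projZ (p : R[i] * R[i] * R[i]) : R[i] := p.2.

Definition base : set R[i] := [set t%:C | t in `]1, zmax[%classic].

Definition circle : set R[i] := [set z | `|z| = 1].

End LaurentP.

(* Main.v *)
Require Import Defs.
From HB Require Import structures.
From mathcomp Require Import all_boot all_order all_algebra.
From mathcomp Require Import all_classical all_reals all_analysis.
From mathcomp Require Import complex.
From mathcomp Require Import ring lra.
Import Order.TTheory GRing.Theory Num.Theory.
Import numFieldNormedType.Exports.
Local Open Scope ring_scope.
Local Open Scope classical_set_scope.
Local Open Scope complex_scope.
Notation cRe := complex.Re.
Notation cIm := complex.Im.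
Section S.
Variable R : realType.

Lemma normC_real (k : R) : `|k%:C| = `|k|%:C :> R[i].
Proof. by rewrite normc_def /= expr0n /= addr0 sqrtr_sqr. Qed.

Lemma pos_C (e : R[i]) : 0 < e -> e = (cRe e)%:C /\ 0 < cRe e.
Proof. by case: e => a b; rewrite ltcE /= => /andP[/eqP -> ->]. Qed.

Lemma cont_C : continuous (fun k : R => k%:C : R[i]).
Proof.
move=> x. change ((fun k : R => k%:C : R[i]^o) @ x --> (x%:C : R[i]^o)).
apply/cvgrPdist_lt => e /pos_C [-> e0].
near=> t.
have : `|x - t| < cRe e. 
  near: t. by apply: cvgr_dist_lt.
move=> H.
have -> : x%:C - t%:C = (x - t)%:C :> R[i] by rewrite rmorphB.
by rewrite normC_real ltcR.
Unshelve. all: by end_near. Qed.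

Lemma ReB (x y : R[i]) : cRe (x - y) = cRe x - cRe y.
Proof. by case: x => a b; case: y => c d. Qed.
Lemma ImB (x y : R[i]) : cIm (x - y) = cIm x - cIm y.
Proof. by case: x => a b; case: y => c d. Qed.

Lemma cont_Re' : continuous (fun z : R[i]^o => cRe z).
Proof.
move=> x.
apply/(@cvgrPdist_lt _ _ _ _ (nbhs_filter (x : R[i]^o))) => e e0.
near=> t.
have : `|x - t| < e%:C.
  near: t. apply: cvgr_dist_lt; first exact: cvg_id. by rewrite ltcE /= eqxx e0.
move=> H.
rewrite -ReB.
rewrite -ltcR; apply: le_lt_trans H; exact: normc_ge_Re.
Unshelve. all: by end_near. Qed.

Lemma cont_Re : continuous (fun z : R[i] => cRe z).
Proof. exact: cont_Re'. Qed.

Lemma normc_ge_Im (x : R[i]) : `|cIm x|%:C <= `|x|.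
Proof.
case: x => a b; simpc => /=; by rewrite -sqrtr_sqr ler_wsqrtr // lerDr sqr_ge0.
Qed.

Lemma cont_Im' : continuous (fun z : R[i]^o => cIm z).
Proof.
move=> x.
apply/(@cvgrPdist_lt _ _ _ _ (nbhs_filter (x : R[i]^o))) => e e0.
near=> t.
have : `|x - t| < e%:C.
  near: t. apply: cvgr_dist_lt; first exact: cvg_id. by rewrite ltcE /= eqxx e0.
move=> H.
rewrite -ImB.
rewrite -ltcR; apply: le_lt_trans H; exact: normc_ge_Im.
Unshelve. all: by end_near. Qed.

Lemma cont_Im : continuous (fun z : R[i] => cIm z).
Proof. exact: cont_Im'. Qed.


Lemma cont_cplx {T : topologicalType} (f g : T -> R) (x : T) :
  {for x, continuous f} -> {for x, continuous g} ->
  {for x, continuous (fun t => f t +i* g t)}.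
Proof.
move=> cf cg.
have e : (fun t => f t +i* g t) = (fun t => (f t)%:C + 'i * (g t)%:C :> R[i]^o).
  apply: funext => t; apply/eqP; by rewrite eq_complex /=; simpc.
have ex : f x +i* g x = (f x)%:C + 'i * (g x)%:C.
  by apply/eqP; rewrite eq_complex /=; simpc.
suff H : (fun t => (f t)%:C + 'i * (g t)%:C : R[i]^o) @ x --> ((f x)%:C + 'i * (g x)%:C : R[i]^o).
  by move: H; rewrite -e -ex.
apply: cvgD.
  exact: (continuous_comp cf (cont_C _)).
apply: cvgM; first exact: cvg_cst.
exact: (continuous_comp cg (cont_C _)).
Qed.

Section gen.
Context {T : topologicalType}.
Implicit Types (f g : T -> R) (x : T).
Lemma contD f g x : {for x, continuous f} -> {for x, continuous g} ->
  {for x, continuous (fun t => f t + g t)}.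
Proof. by move=> cf cg; apply: cvgD. Qed.
Lemma contB f g x : {for x, continuous f} -> {for x, continuous g} ->
  {for x, continuous (fun t => f t - g t)}.
Proof. by move=> cf cg; apply: cvgB. Qed.
Lemma contM f g x : {for x, continuous f} -> {for x, continuous g} ->
  {for x, continuous (fun t => f t * g t)}.
Proof. by move=> cf cg; apply: cvgM. Qed.
Lemma contV f x : f x != 0 -> {for x, continuous f} ->
  {for x, continuous (fun t => (f t)^-1)}.
Proof. by move=> f0 cf; apply: cvgV. Qed.
Lemma contDiv f g x : g x != 0 -> {for x, continuous f} -> {for x, continuous g} ->
  {for x, continuous (fun t => f t / g t)}.
Proof. by move=> g0 cf cg; apply: contM => //; apply: contV. Qed.
Lemma contX f x : {for x, continuous f} -> {for x, continuous (fun t => f t ^+ 2)}.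
Proof.
move=> cf; suff -> : (fun t => f t ^+ 2) = (fun t => f t * f t) by exact: contM.
by apply: funext => t; rewrite expr2.
Qed.
Lemma contc (c : R) x : {for x, continuous (fun _ : T => c)}.
Proof. exact: cvg_cst. Qed.
Lemma contS f x : {for x, continuous f} -> {for x, continuous (fun t => Num.sqrt (f t))}.
Proof. by move=> cf; apply: (continuous_comp cf); apply: sqrt_continuous. Qed.
Lemma contRe (f : T -> R[i]) x : {for x, continuous f} -> {for x, continuous (fun t => cRe (f t))}.
Proof. by move=> cf; apply: (continuous_comp cf); apply: cont_Re. Qed.
Lemma contIm (f : T -> R[i]) x : {for x, continuous f} -> {for x, continuous (fun t => cIm (f t))}.
Proof. by move=> cf; apply: (continuous_comp cf); apply: cont_Im. Qed.
End gen.


Section gen2.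
Context {T U V : topologicalType}.
Lemma contP (f : T -> U) (g : T -> V) x : {for x, continuous f} -> {for x, continuous g} ->
  {for x, continuous (fun t => (f t, g t))}.
Proof. by move=> cf cg; apply: cvg_pair. Qed.
Lemma cont_fst (x : U * V) : {for x, continuous (fun t : U * V => t.1)}.
Proof. exact: cvg_fst. Qed.
Lemma cont_snd (x : U * V) : {for x, continuous (fun t : U * V => t.2)}.
Proof. exact: cvg_snd. Qed.
Lemma contF (f : T -> U * V) x : {for x, continuous f} -> {for x, continuous (fun t => (f t).1)}.
Proof. by move=> cf; apply: (continuous_comp cf); apply: cont_fst. Qed.
Lemma contSn (f : T -> U * V) x : {for x, continuous f} -> {for x, continuous (fun t => (f t).2)}.
Proof. by move=> cf; apply: (continuous_comp cf); apply: cont_snd. Qed.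
Lemma contcst (c : U) (x : T) : {for x, continuous (fun _ : T => c)}.
Proof. exact: cvg_cst. Qed.
Lemma contId' (x : T) : {for x, continuous (@id T)}.
Proof. exact: cvg_id. Qed.
Lemma contId (x : T) : {for x, continuous (fun t : T => t)}.
Proof. exact: cvg_id. Qed.
End gen2.


Lemma invcE (a b : R) : (a +i* b)^-1 = (a / (a^+2 + b^+2)) +i* (- (b / (a^+2 + b^+2))).
Proof. by []. Qed.

Lemma Pol_expand (a b c d x y : R) : a^+2+b^+2 = 1 -> c^+2+d^+2 = 1 ->
  Pol (a+i*b) (c+i*d) (x+i*y) = ((2*a + 2*c + x + x/(x^+2+y^+2) - 2) +i* (y - y/(x^+2+y^+2))).
Proof.
move=> h1 h2; rewrite /Pol !invcE h1 h2 !divr1.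
simpc. apply/eqP; rewrite eq_complex /=; apply/andP; split; apply/eqP; ring.
Qed.

Lemma normcE' (a b : R) : `|a +i* b| = (Num.sqrt (a^+2 + b^+2))%:C.
Proof. by rewrite normc_def. Qed.

Lemma norm1P (a b : R) : (`|a +i* b| = 1) <-> (a^+2 + b^+2 = 1).
Proof.
rewrite normcE'; split.
  move/(congr1 (@complex.Re R)) => /= h; by rewrite -[LHS]sqr_sqrtr ?addr_ge0 ?sqr_ge0 // h expr1n.
by move=> ->; rewrite sqrtr1.
Qed.

Lemma norm_gt1P (a b : R) : (1 < `|a +i* b|) <-> (1 < a^+2 + b^+2).
Proof.
rewrite normcE' ltcE /= eqxx /=; split => h.
  have s0 : 0 <= Num.sqrt (a ^+ 2 + b ^+ 2) by apply: sqrtr_ge0.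
  have := sqr_sqrtr (addr_ge0 (sqr_ge0 a) (sqr_ge0 b)); nra.
by rewrite -sqrtr1 ltr_sqrt // (lt_trans ltr01).
Qed.

Lemma s2_facts : Num.sqrt (2:R) ^+ 2 = 2 /\ 0 <= Num.sqrt (2:R).
Proof. by rewrite sqr_sqrtr // sqrtr_ge0. Qed.

Lemma zmax_le (x : R) : 1 < x -> x + x^-1 <= 6 -> x <= zmax R.
Proof.
move=> x1 h; have [s2 s0] := s2_facts; rewrite /zmax.
have xu : x * x^-1 = 1 by rewrite mulfV // gt_eqF // (lt_trans ltr01).
nra.
Qed.

Lemma zmax_eq (x : R) : 1 < x -> x + x^-1 = 6 -> x = zmax R.
Proof.
move=> x1 h; have [s2 s0] := s2_facts; rewrite /zmax.
have xu : x * x^-1 = 1 by rewrite mulfV // gt_eqF // (lt_trans ltr01).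
have : (x - 3) ^+ 2 = (2 * Num.sqrt 2) ^+ 2 by nra.
move/eqP; rewrite eqf_sqr => /orP[/eqP|/eqP]; first by lra.
nra.
Qed.

Lemma zmax_lt (x : R) : 1 < x < zmax R -> 0 < (x + x^-1)/2 - 1 < 2.
Proof.
case/andP=> x1 x2; have [s2 s0] := s2_facts; move: x2; rewrite /zmax => x2.
have xu : x * x^-1 = 1 by rewrite mulfV // gt_eqF // (lt_trans ltr01).
have u0 : 0 < x^-1 by rewrite invr_gt0 (lt_trans ltr01).
have s1 : 1 < Num.sqrt (2:R) by nra.
have e1 : x + x^-1 - 2 = x^-1 * (x - 1)^+2 by field; rewrite gt_eqF // (lt_trans ltr01).
have e2 : x + x^-1 - 6 = x^-1 * ((x - 3 - 2 * Num.sqrt 2) * (x - 3 + 2 * Num.sqrt 2)).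
  by field: s2; rewrite gt_eqF // (lt_trans ltr01).
have h1 : 0 < x^-1 * (x - 1)^+2 by apply: mulr_gt0 => //; apply: exprn_gt0; lra.
have h2 : x^-1 * ((x - 3 - 2 * Num.sqrt 2) * (x - 3 + 2 * Num.sqrt 2)) < 0.
  by rewrite pmulr_rlt0 // nmulr_rlt0; lra.
apply/andP; split; lra.
Qed.


Lemma cN1 : (-1 : R[i]) = (-1) +i* 0.
Proof. by apply/eqP; rewrite eq_complex /= oppr0 !eqxx. Qed.

Lemma zmax_inv : zmax R + (zmax R)^-1 = 6.
Proof.
have [s2 s0] := s2_facts; rewrite /zmax.
have -> : (3 + 2 * Num.sqrt (2:R))^-1 = 3 - 2 * Num.sqrt 2.
  have h : (3 + 2 * Num.sqrt (2:R)) * (3 - 2 * Num.sqrt 2) = 1 by nra.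
  have nz : (3 + 2 * Num.sqrt (2:R)) != 0 by rewrite gt_eqF //; lra.
  by apply: (mulfI nz); rewrite mulfV // h.
lra.
Qed.

Lemma DP'_facts (p : R[i]*R[i]*R[i]) : @DP' R p ->
  exists a b c d z : R, [/\ p = ((a +i* b, c +i* d), z%:C), a^+2+b^+2 = 1, c^+2+d^+2 = 1 &
     [/\ 1 < z < zmax R, a + c = 1 - (z + z^-1)/2, a != 1, c != 1 & (b != 0) || (d != 0)]].
Proof.
case: p => [[[a b] [c d]] [x y]] [[/= X0 Y0 Z0 hP [n1 n2 n3]] hne].
move/norm1P in n1; move/norm1P in n2; move/norm_gt1P in n3.
rewrite Pol_expand // in hP. move/eqP: hP; rewrite eq_complex /= => /andP[/eqP e1 /eqP e2].
have n0 : x ^+ 2 + y ^+ 2 != 0 by rewrite gt_eqF // (lt_trans ltr01).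
have y0 : y = 0.
  have : y * (x ^+ 2 + y ^+ 2 - 1) = 0.
    have -> : y * (x ^+ 2 + y ^+ 2 - 1) = (x ^+ 2 + y ^+ 2) * (y - y / (x ^+ 2 + y ^+ 2)) by field.
    by rewrite e2 mulr0.
  by move/eqP; rewrite mulf_eq0 => /orP[/eqP //|]; rewrite subr_eq0 => /eqP h; move: n3; rewrite h ltxx.
subst y.
have xne0 : x != 0 by apply: contraTneq n3 => ->; rewrite expr0n /= addr0 ltr10.
have ex : x / (x ^+ 2 + 0 ^+ 2) = x^-1 by rewrite expr0n /= addr0 expr2 invfM mulrA mulfV // mul1r.
rewrite ex in e1; rewrite expr0n /= addr0 in n3.
have xu : x * x^-1 = 1 by rewrite mulfV.
have al : -1 <= a by nra.
have ah : a <= 1 by nra.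
have cl : -1 <= c by nra.
have ch : c <= 1 by nra.
have x1 : 1 < x.
  case: (ltrP 1 x) => // hx.
  have xn : x < -1 by nra.
  have u0 : x^-1 < 0 by rewrite invr_lt0; lra.
  have h2 : 0 < (x + 1)^+2 by rewrite expr2; nra.
  have : x^-1 * (x + 1)^+2 < 0 by rewrite nmulr_rlt0.
  have -> : x^-1 * (x + 1)^+2 = x + x^-1 + 2 by field.
  lra.
have sum : a + c = 1 - (x + x^-1) / 2 by lra.
have xz : x <= zmax R by apply: zmax_le => //; lra.
have xz' : x != zmax R.
  apply/eqP => xe; apply: hne; rewrite xe in sum; rewrite zmax_inv in sum.
  have ha : a = -1 by nra.
  have hc : c = -1 by nra.
  have hb : b = 0 by nra.
  have hd : d = 0 by nra.
  by rewrite ha hb hc hd -cN1 xe.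
have x2 : x < zmax R by rewrite lt_neqAle xz' xz.
clear hne X0 Y0 Z0 e2.
have /andP[k0 k2] : 0 < (x + x^-1)/2 - 1 < 2 by apply: zmax_lt; rewrite x1 x2.
exists a, b, c, d, x; split => //; split => //.
- by rewrite x1 x2.
- by apply/eqP => ha; nra.
- by apply/eqP => hc; nra.
- apply/negP => /negP; rewrite negb_or => /andP[/negPn/eqP hb /negPn/eqP hd].
  have ha : a = -1 by move: k0; rewrite hb in n1; nra.
  have hc : c = -1 by move: k0; rewrite hd in n2; nra.
  have : x + x^-1 = 6 by lra.
  by move/(zmax_eq _ x1) => /eqP; rewrite (negbTE xz').
Qed.


Definition tau (X : R[i]) : R := cIm X / (1 - cRe X).
Definition Xof (t : R) : R[i] := ((t^+2 - 1)/(1 + t^+2)) +i* (2*t/(1+t^+2)).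
Definition nrm (u v : R) := Num.sqrt (u^+2 + v^+2).
Definition hw (X Y : R[i]) : R[i] :=
  (tau X / nrm (tau X) (tau Y)) +i* (tau Y / nrm (tau X) (tau Y)).
Definition hmap (p : R[i]*R[i]*R[i]) : R[i]*R[i] := (p.2, hw p.1.1 p.1.2).
Definition kof (z : R) := (z + z^-1)/2 - 1.
Definition xof (k P : R) := 2*(2-k)/(k + Num.sqrt (k^+2 + 4*(4-k^+2)*P)).
Definition rof (q : R[i]*R[i]) : R :=
  Num.sqrt (xof (kof (cRe q.1)) ((cRe q.2 * cIm q.2)^+2)).
Definition gmap (q : R[i]*R[i]) : R[i]*R[i]*R[i] :=
  ((Xof (rof q * cRe q.2), Xof (rof q * cIm q.2)), q.1).

Lemma opt2_gt0 (t : R) : 0 < 1 + t^+2.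
Proof. by apply: ltr_pwDl => //; apply: sqr_ge0. Qed.

Lemma Xof_tau (a b : R) : a^+2 + b^+2 = 1 -> a != 1 -> Xof (tau (a +i* b)) = a +i* b.
Proof.
move=> h a1; rewrite /Xof /tau /=.
have d0 : 1 - a != 0 by rewrite subr_eq0 eq_sym.
have hb : b^+2 = 1 - a^+2 by lra.
have e : (b / (1 - a))^+2 = (1 + a) / (1 - a).
  by rewrite expr_div_n hb; field.
rewrite e; apply/eqP; rewrite eq_complex /=; apply/andP; split; apply/eqP.
  field; rewrite d0 /= (_ : 1 - a + (1 + a) = 2) ?pnatr_eq0 //; ring.
field; rewrite d0 /= (_ : 1 - a + (1 + a) = 2) ?pnatr_eq0 //; ring.
Qed.

Lemma tau_Xof (t : R) : tau (Xof t) = t.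
Proof.
rewrite /tau /Xof /=; have := opt2_gt0 t => h.
field; rewrite ?(gt_eqF h) /= (_ : 1 + t^+2 - (t^+2 - 1) = 2) ?pnatr_eq0 //; ring.
Qed.

Lemma Xof_norm (t : R) : cRe (Xof t) ^+ 2 + cIm (Xof t) ^+ 2 = 1.
Proof.
rewrite /Xof /=; have := opt2_gt0 t => h.
by field; rewrite gt_eqF.
Qed.

Lemma Xof_Re (t : R) : cRe (Xof t) = (t^+2 - 1)/(1 + t^+2).
Proof. by []. Qed.



Lemma xof_root (k P : R) : 0 < k < 2 -> 0 <= P ->
  0 < xof k P /\ (k+2)*P*(xof k P)^+2 + k*(xof k P) + (k-2) = 0.
Proof.
case/andP=> k0 k2 P0; rewrite /xof.
have D0 : 0 <= k^+2 + 4*(4-k^+2)*P.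
  by apply: addr_ge0; [apply: sqr_ge0| apply: mulr_ge0 => //; nra].
have := sqr_sqrtr D0; have := sqrtr_ge0 (k^+2 + 4*(4-k^+2)*P).
set s := Num.sqrt _ => s0 s2.
have ks : 0 < k + s by lra.
split; first by apply: divr_gt0 => //; lra.
have -> : (k + 2) * P * (2 * (2 - k) / (k + s)) ^+ 2 + k * (2 * (2 - k) / (k + s)) + (k - 2)
   = (2 - k) * (4 * (k + 2) * P * (2 - k) + k^+2 - s^+2) / (k + s)^+2.
  by field; rewrite gt_eqF.
by rewrite s2 (_ : 4 * (k + 2) * P * (2 - k) + k ^+ 2 - (k ^+ 2 + 4 * (4 - k ^+ 2) * P) = 0) ?mulr0 ?mul0r //; ring.
Qed.

Lemma xof_uniq (k P x : R) : 0 < k < 2 -> 0 <= P -> 0 < x ->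
  (k+2)*P*x^+2 + k*x + (k-2) = 0 -> x = xof k P.
Proof.
case/andP=> k0 k2 P0 x0 hq; rewrite /xof.
have e : k^+2 + 4*(4-k^+2)*P = (2*(k+2)*P*x + k)^+2.
  have hq' : (k+2)*P*x^+2 + k*x = 2 - k by lra.
  have -> : (2*(k+2)*P*x + k)^+2 = k^+2 + 4*(k+2)*P*((k+2)*P*x^+2 + k*x) by ring.
  by rewrite hq'; ring.
have a0 : 0 <= 2*(k+2)*P*x + k.
  have px : 0 <= P * x by apply: mulr_ge0 => //; lra.
  nra.
rewrite e sqrtr_sqr ger0_norm //.
have -> : 2 * (2 - k) = x * (k + (2 * (k + 2) * P * x + k)) by nra.
by rewrite mulfK // gt_eqF //; lra.
Qed.

Lemma sum_ident (k x p q : R) : p^+2 + q^+2 = 1 -> 0 <= x ->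
  cRe (Xof (Num.sqrt x * p)) + cRe (Xof (Num.sqrt x * q)) + k =
  ((k+2)*((p*q)^+2)*x^+2 + k*x + (k-2)) / ((1 + x * p^+2)*(1 + x * q^+2)).
Proof.
move=> hpq x0; rewrite !Xof_Re !exprMn sqr_sqrtr //.
have h1 : 0 < 1 + x * p^+2 by apply: ltr_pwDl => //; apply: mulr_ge0 => //; apply: sqr_ge0.
have h2 : 0 < 1 + x * q^+2 by apply: ltr_pwDl => //; apply: mulr_ge0 => //; apply: sqr_ge0.
have -> : (k + 2) * (p ^+ 2 * q ^+ 2) * x ^+ 2 + k * x + (k - 2) =
  (k + 2) * (p ^+ 2 * q ^+ 2) * x ^+ 2 + k * x * (p^+2 + q^+2) + (k - 2) by rewrite hpq mulr1.
field; rewrite !gt_eqF //.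
Qed.


Lemma kof_bounds (z : R) : 1 < z < zmax R -> 0 < kof z < 2.
Proof. exact: zmax_lt. Qed.

Lemma Xof_neq0 (t : R) : Xof t != 0.
Proof.
apply/negP => /eqP h; have := Xof_norm t; rewrite h /= expr0n /= addr0 => /eqP.
by rewrite eq_sym oner_eq0.
Qed.

Lemma zC (z : R) : z%:C = z +i* 0.
Proof. by []. Qed.

Lemma cplx_neq0 (a b : R) : a^+2 + b^+2 = 1 -> a +i* b != 0.
Proof.
move=> h; apply/eqP => -[ha hb]; move: h; rewrite ha hb expr0n /= addr0 => /eqP.
by rewrite eq_sym oner_eq0.
Qed.

Lemma DP_intro (a b c d z : R) : a^+2 + b^+2 = 1 -> c^+2 + d^+2 = 1 -> 1 < z ->
  a + c = 1 - (z + z^-1)/2 -> DP (R:=R) (a +i* b, c +i* d, z%:C).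
Proof.
move=> na nc z1 hs.
have z0 : z != 0 by rewrite gt_eqF // (lt_trans ltr01).
split => /=.
- exact: cplx_neq0 na.
- exact: cplx_neq0 nc.
- by rewrite zC; apply/eqP => -[h]; move: z0; rewrite h eqxx.
- rewrite zC Pol_expand // expr0n /= addr0 mul0r subr0.
  have -> : z / z^+2 = z^-1 by rewrite expr2 invfM mulrA mulfV // mul1r.
  apply/eqP; rewrite eq_complex /= eqxx andbT; apply/eqP; lra.
- split.
  + by apply/norm1P.
  + by apply/norm1P.
  + by rewrite zC; apply/norm_gt1P; rewrite expr0n /= addr0; nra.
Qed.

Lemma gmap_good (z p q : R) : 1 < z < zmax R -> p^+2 + q^+2 = 1 ->
  @DP' R (gmap (z%:C, p +i* q)) /\ hmap (gmap (z%:C, p +i* q)) = (z%:C, p +i* q).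
Proof.
move=> hz hpq; have hk := kof_bounds _ hz; have /andP[k0 k2] := hk.
have /andP[z1 z2] := hz.
have P0 : 0 <= (p * q)^+2 by apply: sqr_ge0.
have [x0 hQ] := xof_root _ _ hk P0.
set k := kof z in hk k0 k2 x0 hQ *.
set x := xof k _ in x0 hQ *.
have hr : rof (z%:C, p +i* q) = Num.sqrt x by [].
set r := Num.sqrt x in hr.
have r0 : 0 < r by rewrite sqrtr_gt0.
have hsum : cRe (Xof (r * p)) + cRe (Xof (r * q)) = - k.
  have := sum_ident k x p q hpq (ltW x0).
  rewrite -/r hQ mul0r => h; lra.
split.
  split; last first.
    move=> /(congr1 snd) /= /(congr1 (@complex.Re R)) /= hze.
    by move: z2; rewrite hze ltxx.
  rewrite /gmap hr /=.
  move: (Xof_norm (r * p)) (Xof_norm (r * q)) hsum.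
  rewrite /Xof /=.
  set a := (_ / (1 + _)); set b := (2 * _ / _); set c := (_ / (1 + _)); set d := (2 * _ / _).
  move=> na nc hs; apply: DP_intro => //; rewrite hs /k /kof; lra.
rewrite /hmap /gmap hr /= /hw !tau_Xof /nrm !exprMn -mulrDr hpq mulr1 sqrtr_sqr ger0_norm; last exact: ltW.
by rewrite ![r * _]mulrC !mulfK // gt_eqF.
Qed.


Lemma hmap_good (p : R[i]*R[i]*R[i]) : @DP' R p ->
  [/\ @base R (hmap p).1, @circle R (hmap p).2 & gmap (hmap p) = p].
Proof.
move=> hp; have [a [b [c [d [z [-> na nc [hz hs a1 c1 bd]]]]]]] := DP'_facts _ hp.
have hk := kof_bounds _ hz; have /andP[k0 k2] := hk.
rewrite /hmap /=.
set t1 := tau (a +i* b); set t2 := tau (c +i* d).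
have t0 : (t1 != 0) || (t2 != 0).
  case/orP: bd => h; apply/orP; [left|right]; rewrite /t1 /t2 /tau /= mulf_neq0 // invr_eq0 subr_eq0 eq_sym //.
have n2 : 0 < t1^+2 + t2^+2.
  have := sqr_ge0 t1; have := sqr_ge0 t2.
  case/orP: t0 => h; [have : 0 < t1^+2 by rewrite exprn_even_gt0 //= h
                     |have : 0 < t2^+2 by rewrite exprn_even_gt0 //= h]; lra.
have hn := sqr_sqrtr (ltW n2); have n0 : 0 < nrm t1 t2 by rewrite sqrtr_gt0.
rewrite -/(nrm t1 t2) in hn.
set n := nrm t1 t2 in hn n0 *.
have hw_e : hw (a +i* b) (c +i* d) = (t1 / n) +i* (t2 / n) by [].
have hpq : (t1 / n)^+2 + (t2 / n)^+2 = 1.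
  have nz : n != 0 by rewrite gt_eqF.
  apply/eqP; rewrite -subr_eq0.
  have -> : (t1 / n)^+2 + (t2 / n)^+2 - 1 = (t1^+2 + t2^+2 - n^+2) / n^+2 by field.
  by rewrite hn subrr mul0r.
split.
- exists z => //=; rewrite in_itv /=; exact: hz.
- by rewrite /circle /= hw_e; apply/norm1P.
rewrite /gmap /rof hw_e /=.
have hQ : (kof z + 2) * ((t1 / n) * (t2 / n))^+2 * (n^+2)^+2 + kof z * n^+2 + (kof z - 2) = 0.
  have := sum_ident (kof z) (n^+2) (t1 / n) (t2 / n) hpq (sqr_ge0 n).
  rewrite sqrtr_sqr ger0_norm ?(ltW n0) // ![n * (_ / n)]mulrC !divfK ?gt_eqF //.
  rewrite Xof_tau // Xof_tau // /= (_ : a + c + kof z = 0); last by rewrite hs /kof; lra.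
  set D := ((1 + _) * (1 + _)).
  have D0 : 0 < D.
    by apply: mulr_gt0; apply: ltr_pwDl => //; apply: mulr_ge0; rewrite ?sqr_ge0.
  move/esym/eqP; rewrite mulf_eq0 invr_eq0 (gt_eqF D0) orbF.
  by move/eqP.
have hx := xof_uniq _ _ _ hk (sqr_ge0 _) (exprn_gt0 2 n0) hQ.
rewrite /= -hx sqrtr_sqr ger0_norm ?(ltW n0) // ![n * (_ / n)]mulrC !divfK ?gt_eqF //.
by rewrite Xof_tau // Xof_tau.
Qed.

Lemma cont_tau {T : topologicalType} (f : T -> R[i]) x : cRe (f x) != 1 ->
  {for x, continuous f} -> {for x, continuous (fun t => tau (f t))}.
Proof.
move=> h cf; apply: contDiv; first by rewrite subr_eq0 eq_sym.
  exact: contIm.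
apply: contB; [exact: contc|exact: contRe].
Qed.

Lemma DP'_nz (p : R[i]*R[i]*R[i]) : @DP' R p ->
  [/\ cRe p.1.1 != 1, cRe p.1.2 != 1 & 0 < nrm (tau p.1.1) (tau p.1.2)].
Proof.
move=> hp; have [a [b [c [d [z [-> na nc [hz hs a1 c1 bd]]]]]]] := DP'_facts _ hp.
split => //=.
set t1 := tau (a +i* b); set t2 := tau (c +i* d).
have t0 : (t1 != 0) || (t2 != 0).
  case/orP: bd => h; apply/orP; [left|right]; rewrite /t1 /t2 /tau /= mulf_neq0 // invr_eq0 subr_eq0 eq_sym //.
have n2 : 0 < t1^+2 + t2^+2.
  have := sqr_ge0 t1; have := sqr_ge0 t2.
  case/orP: t0 => h; [have : 0 < t1^+2 by rewrite exprn_even_gt0 //= h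
                     |have : 0 < t2^+2 by rewrite exprn_even_gt0 //= h]; lra.
by rewrite sqrtr_gt0.
Qed.

Lemma cont_hmap (p : R[i]*R[i]*R[i]) : @DP' R p -> {for p, continuous hmap}.
Proof.
move=> hp; have [h1 h2 h3] := DP'_nz _ hp.
have c11 : {for p, continuous (fun t : R[i]*R[i]*R[i] => t.1.1)}.
  by apply: contF; apply: cont_fst.
have c12 : {for p, continuous (fun t : R[i]*R[i]*R[i] => t.1.2)}.
  by apply: contSn; apply: cont_fst.
have ct1 := cont_tau (fun t : R[i]*R[i]*R[i] => t.1.1) p h1 c11.
have ct2 := cont_tau (fun t : R[i]*R[i]*R[i] => t.1.2) p h2 c12.
have cn : {for p, continuous (fun t : R[i]*R[i]*R[i] => nrm (tau t.1.1) (tau t.1.2))}.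
  by rewrite /nrm; apply: contS; apply: contD; apply: contX.
rewrite /hmap; apply: contP; first exact: cont_snd.
rewrite /hw; apply: cont_cplx; apply: contDiv => //; exact: lt0r_neq0.
Qed.


Lemma cont_Xof {T : topologicalType} (f : T -> R) x : {for x, continuous f} ->
  {for x, continuous (fun t => Xof (f t))}.
Proof.
move=> cf; rewrite /Xof; apply: cont_cplx; apply: contDiv.
- by rewrite gt_eqF // opt2_gt0.
- by apply: contB; [apply: contX|apply: contc].
- by apply: contD; [apply: contc|apply: contX].
- by rewrite gt_eqF // opt2_gt0.
- by apply: contM; [apply: contc|].
- by apply: contD; [apply: contc|apply: contX].
Qed.

Lemma cont_gmap (q : R[i]*R[i]) : @base R q.1 -> {for q, continuous gmap}.
Proof.
case: q => Z w [z hz /= <-].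
have hz' : 1 < z < zmax R by move: hz; rewrite /= in_itv.
have /andP[k0 k2] := kof_bounds _ hz'.
have z0 : z != 0 by rewrite gt_eqF //; case/andP: hz' => z1 _; exact: (lt_trans ltr01).
set q := (z%:C, w).
have cz : {for q, continuous (fun t : R[i]*R[i] => cRe t.1)}.
  by apply: contRe; apply: cont_fst.
have ck : {for q, continuous (fun t : R[i]*R[i] => kof (cRe t.1))}.
  rewrite /kof; apply: contB; last exact: contc.
  apply: contDiv; [by []| |exact: contc].
  by apply: contD => //; apply: contV.
have cp : {for q, continuous (fun t : R[i]*R[i] => cRe t.2)}.
  by apply: contRe; apply: cont_snd.
have cq : {for q, continuous (fun t : R[i]*R[i] => cIm t.2)}.
  by apply: contIm; apply: cont_snd.
have cr : {for q, continuous (fun t : R[i]*R[i] => rof t)}.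
  rewrite /rof /xof; apply: contS; apply: contDiv.
  - by rewrite /= gt_eqF // (lt_le_trans k0) // lerDl sqrtr_ge0.
  - by apply: contM; [apply: contc|apply: contB; [apply: contc|]].
  - apply: contD => //; apply: contS; apply: contD; first exact: contX.
    apply: contM; last by apply: contX; apply: contM.
    by apply: contM; [apply: contc|apply: contB; [apply: contc|apply: contX]].
rewrite /gmap; apply: contP; last exact: cont_fst.
by apply: contP; apply: cont_Xof; apply: contM.
Qed.


Lemma angle_exists (a b : R) : a^+2 + b^+2 = 1 -> exists phi : R, cos phi = a /\ sin phi = b.
Proof.
move=> h; have ha : -1 <= a <= 1 by apply/andP; split; nra.
have hb : Num.sqrt (1 - a^+2) = `|b| by rewrite -sqrtr_sqr; congr Num.sqrt; lra.
have ca : cos (acos a) = a by rewrite acosK // in_itv.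
case: (lerP 0 b) => b0.
  exists (acos a); split => //; by rewrite sin_acos // hb ger0_norm.
exists (- acos a); rewrite cosN sinN sin_acos // hb ltr0_norm //; split => //; by rewrite opprK.
Qed.

Lemma DP'_intro (a b c d z : R) : a^+2 + b^+2 = 1 -> c^+2 + d^+2 = 1 -> 1 < z < zmax R ->
  a + c = 1 - (z + z^-1)/2 -> @DP' R ((a +i* b, c +i* d), z%:C).
Proof.
move=> na nc /andP[z1 z2] hs; split; first exact: DP_intro.
move=> /(congr1 snd) /= /(congr1 (@complex.Re R)) /= hze.
by move: z2; rewrite hze ltxx.
Qed.

Lemma main_thm :
  fibre_bundle (@DP' R) (@base R) (@projZ R) (@circle R) /\
  (forall z : R, 1 < z < @zmax R ->
     homeomorphic (@DP' R `&` @projZ R @^-1` [set z%:C]) (@circle R)) /\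
  (forall z : R, 1 < z < @zmax R ->
     @DP' R `&` @projZ R @^-1` [set z%:C] =
     [set p | p.2 = z%:C /\
        exists phi psi : R,
          [/\ p.1.1 = (cos phi +i* sin phi), p.1.2 = (cos psi +i* sin psi) &
              cos phi + cos psi = 1 - (z + z^-1) / 2]]).
Proof.
have circP : forall w : R[i], @circle R w -> exists p q, w = p +i* q /\ p^+2 + q^+2 = 1.
  by case=> p q /norm1P h; exists p, q.
have baseP : forall Z : R[i], @base R Z -> exists z, Z = z%:C /\ 1 < z < zmax R.
  by move=> Z [z hz <-]; exists z; split => //; move: hz; rewrite /= in_itv.
have gmap_in : forall q, (@base R `*` @circle R) q -> @DP' R (gmap q) /\ hmap (gmap q) = q.
  case=> Z w [/= /baseP [z [-> hz]] /circP [p [q [-> hpq]]]].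
  exact: gmap_good.
split.
  split.
    apply/seteqP; split.
      by move=> _ [p hp <-]; have [] := hmap_good _ hp.
    move=> Z hZ; have [z [eZ hz]] := baseP _ hZ.
    have h1 : 1 ^+ 2 + 0 ^+ 2 = 1 :> R by rewrite expr1n expr0n addr0.
    have [hg _] := gmap_good _ _ _ hz h1.
    by exists (gmap (z%:C, 1 +i* 0)).
  move=> b hb; exists setT; split => //; first exact: openT.
  exists hmap, gmap; rewrite preimage_setT !setIT; split; last by [].
  split.
  - by move=> p hp; have [h1 h2 _] := hmap_good _ hp; split.
  - by move=> q /gmap_in [].
  - by move=> p hp; have [_ _ ->] := hmap_good _ hp.
  - by move=> q /gmap_in [].
  split.
    apply: continuous_in_subspaceT => p; rewrite inE => hp; exact: cont_hmap.
  apply: continuous_in_subspaceT => q; rewrite inE => -[hq _]; exact: cont_gmap.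
split.
  move=> z hz.
  exists (fun p => (hmap p).2), (fun w => gmap (z%:C, w)).
  split.
  - by move=> p [hp _]; have [] := hmap_good _ hp.
  - move=> w /circP [p [q [-> hpq]]]; have [h1 _] := gmap_good _ _ _ hz hpq.
    by split.
  - move=> p [hp /= hpz]; have [_ _ e] := hmap_good _ hp.
    by rewrite -[in RHS]e /hmap /= -hpz.
  - by move=> w /circP [p [q [-> hpq]]]; have [_ ->] := gmap_good _ _ _ hz hpq.
  split.
    apply: continuous_in_subspaceT => p; rewrite inE => -[hp _].
    by apply: contSn; apply: cont_hmap.
  apply: continuous_in_subspaceT => w; rewrite inE => hw.
  apply: (continuous_comp (f := fun w => (z%:C, w))).
    by apply: contP; [apply: contcst|apply: contId'].
  by apply: cont_gmap; exists z => //=; rewrite in_itv.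
move=> z hz; apply/seteqP; split.
  move=> p [hp /= hpz]; split => //.
  have [a [b [c [d [z' [ep na nc [hz' hs _ _ _]]]]]]] := DP'_facts _ hp.
  have zz : z' = z by move: hpz; rewrite ep => -[].
  have [phi [c1 s1]] := angle_exists _ _ na.
  have [psi [c2 s2]] := angle_exists _ _ nc.
  exists phi, psi; rewrite ep c1 s1 c2 s2 /=; split => //.
  by rewrite -zz.
move=> p [hpz [phi [psi [e1 e2 hs]]]]; split; last by [].
case: p hpz e1 e2 => [[X Y] Z] /= -> -> ->.
by apply: DP'_intro => //; apply: cos2Dsin2.
Qed.

End S.

Theorem lemma2p3 (R : realType) :
  fibre_bundle (@DP' R) (@base R) (@projZ R) (@circle R) /\
  (forall z : R, 1 < z < @zmax R ->
     homeomorphic (@DP' R `&` @projZ R @^-1` [set z%:C]) (@circle R)) /\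
  (forall z : R, 1 < z < @zmax R ->
     @DP' R `&` @projZ R @^-1` [set z%:C] =
     [set p | p.2 = z%:C /\
        exists phi psi : R,
          [/\ p.1.1 = (cos phi +i* sin phi), p.1.2 = (cos psi +i* sin psi) &
              cos phi + cos psi = 1 - (z + z^-1) / 2]]).
Proof. exact: main_thm. Qed.
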